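(* Let $d\ge1$, $z\ge0$, let $0<\varphi_1\le\cdots\le\varphi_d$ and let $\tilde v_1,\ldots,\tilde v_d\in\mathbb C$ be nonzero; set $\varphi_0=z$ and $\varphi_{d+1}=+\infty$. For $\lambda>0$ with $\lambda\notin\{\varphi_1,\dots,\varphi_d\}$ define $$f(\lambda)=\lambda^2\sum_{m=1}^d\frac{\varphi_m|\tilde v_m|^2}{(\lambda-\varphi_m)^2}-\lambda+z,\qquad g(\lambda)=1-\sum_{m=1}^d\frac{\varphi_m|\tilde v_m|^2}{\lambda-\varphi_m}-\frac{z}{\lambda}-\log\lambda.$$ Let $L\in\{1,\ldots,d\}$ and $K\in\{0,\ldots,d-L\}$, and let $\lambda_1\in(\varphi_{L-1},\varphi_L)$ and $\lambda_2\in(\varphi_{L+K},\varphi_{L+K+1})$ satisfy $f(\lambda_1)=f(\lambda_2)=0$. Then $g(\lambda_1)\ge g(\lambda_2)$.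
   Context: Standing assumption of the paper for this lemma: all indices belong to the support $\mathcal S=\{m:\varphi_m|\tilde v_m|^2\ne0\}$, i.e. $\mathcal S=\{1,\ldots,d\}$. Here $\varphi_m$ are the eigenvalues of a Hermitian positive semi-definite matrix and $\tilde v_m$ the coordinates of a vector in its eigenbasis (this interpretation is not needed for the statement). *)

(* Defs.v *)
From Stdlib Require Import Reals.
From Coquelicot Require Import Coquelicot.
Open Scope R_scope.

Fixpoint sumR (n : nat) (F : nat -> R) : R :=
  match n with
  | O => 0
  | S k => sumR k F + F (S k)
  end.

Definition f_fun (d : nat) (z : R) (phi : nat -> R) (v : nat -> C) (lam : R) : R :=
  lam ^ 2 * sumR d (fun m => phi m * (Cmod (v m)) ^ 2 / (lam - phi m) ^ 2) - lam + z.

Definition g_fun (d : nat) (z : R) (phi : nat -> R) (v : nat -> C) (lam : R) : R :=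
  1 - sumR d (fun m => phi m * (Cmod (v m)) ^ 2 / (lam - phi m)) - z / lam - ln lam.

Definition phi_ext (z : R) (phi : nat -> R) (m : nat) : R :=
  match m with O => z | _ => phi m end.

(* lam lies in the open interval (phi_j, phi_{j+1}) with phi_0 = z, phi_{d+1} = +oo *)
Definition in_gap (d : nat) (z : R) (phi : nat -> R) (j : nat) (lam : R) : Prop :=
  phi_ext z phi j < lam /\ ((j < d)%nat -> lam < phi (S j)).

(* Main.v *)
Require Import Defs.
From Stdlib Require Import Reals Lra Lia Arith.
From Coquelicot Require Import Coquelicot.
Open Scope R_scope.

Lemma sumR_lin4 (n : nat) (a b c e : R) (F1 F2 F3 F4 : nat -> R) :
  sumR n (fun m => a * F1 m + b * F2 m + c * F3 m + e * F4 m) =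
  a * sumR n F1 + b * sumR n F2 + c * sumR n F3 + e * sumR n F4.
Proof. induction n as [|n IH]; simpl; [ring| rewrite IH; ring]. Qed.

Lemma sumR_nonneg (n : nat) (F : nat -> R) :
  (forall m, (1 <= m <= n)%nat -> 0 <= F m) -> 0 <= sumR n F.
Proof.
  induction n as [|n IH]; intros H; simpl; [lra|].
  assert (0 <= sumR n F) by (apply IH; intros; apply H; lia).
  assert (0 <= F (S n)) by (apply H; lia). lra.
Qed.

Lemma phi_ext_S z phi j : (1 <= j)%nat -> phi_ext z phi j = phi j.
Proof. destruct j; [lia|reflexivity]. Qed.

Lemma ln_ineq (x y : R) : 0 < x -> x <= y -> 2 * (y - x) / (x + y) <= ln y - ln x.
Proof.
  intros Hx Hxy. destruct (Req_dec x y) as [->|Hne].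
  { replace (y - y) with 0 by ring. unfold Rdiv. rewrite Rmult_0_r, Rmult_0_l. lra. }
  set (h := fun u => ln u - ln x - 2 * (u - x) / (u + x)).
  set (h' := fun u => / u - 2 * ((u + x) - (u - x)) / (u + x) ^ 2).
  destruct (MVT_cor2 h h' x y) as [c [Hc1 Hc2]]; [lra| |].
  - intros c Hc. apply is_derive_Reals. unfold h, h'.
    auto_derive; [repeat split; lra|]. field. lra.
  - assert (h x = 0) as Hx0.
    { unfold h. replace (x - x) with 0 by ring. unfold Rdiv. rewrite Rmult_0_r, Rmult_0_l. ring. }
    assert (0 <= h' c).
    { unfold h'. replace (/ c - 2 * (c + x - (c - x)) / (c + x) ^ 2)
        with ((c - x) ^ 2 / (c * (c + x) ^ 2)) by (field; lra).
      apply Rmult_le_pos; [nra|]. apply Rlt_le, Rinv_0_lt_compat.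
      apply Rmult_lt_0_compat; [lra|nra]. }
    assert (Hhy : 0 <= h y) by (rewrite Hx0 in Hc1; assert (Ehy : h y = h' c * (y - x)) by lra; rewrite Ehy; apply Rmult_le_pos; lra).
    unfold h in Hhy. rewrite (Rplus_comm y x) in Hhy. lra.
Qed.

Lemma term_nonneg (x y p c : R) : 0 < x -> x < y -> 0 <= p -> 0 <= c -> p <> x -> p <> y ->
  0 <= -1 * (p * c / (x - p)) + 1 * (p * c / (y - p))
       + ((y - x) / (x * (x + y)) * x ^ 2) * (p * c / (x - p) ^ 2)
       + ((y - x) / (y * (x + y)) * y ^ 2) * (p * c / (y - p) ^ 2).
Proof.
  intros Hx Hxy Hp Hc H1 H2.
  assert (x - p <> 0) by lra. assert (y - p <> 0) by lra.
  replace (-1 * (p * c / (x - p)) + 1 * (p * c / (y - p))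
       + ((y - x) / (x * (x + y)) * x ^ 2) * (p * c / (x - p) ^ 2)
       + ((y - x) / (y * (x + y)) * y ^ 2) * (p * c / (y - p) ^ 2))
    with (p * c * p * (y - x) ^ 3 / ((x + y) * (x - p) ^ 2 * (y - p) ^ 2))
    by (field; repeat split; lra).
  apply Rmult_le_pos.
  - apply Rmult_le_pos; [|apply pow_le; lra]. apply Rmult_le_pos; [|lra]. nra.
  - apply Rlt_le, Rinv_0_lt_compat.
    assert (0 < (x - p) ^ 2) by (simpl; rewrite Rmult_1_r; apply Rsqr_pos_lt; assumption).
    assert (0 < (y - p) ^ 2) by (simpl; rewrite Rmult_1_r; apply Rsqr_pos_lt; assumption).
    apply Rmult_lt_0_compat; [apply Rmult_lt_0_compat|]; lra.
Qed.

Theorem lemma5 (d : nat) (z : R) (phi : nat -> R) (v : nat -> C)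
  (L K : nat) (lam1 lam2 : R) :
  (1 <= d)%nat ->
  0 <= z ->
  0 < phi 1%nat ->
  (forall m, (1 <= m < d)%nat -> phi m <= phi (S m)) ->
  (forall m, (1 <= m <= d)%nat -> v m <> 0%C) ->
  (1 <= L <= d)%nat ->
  (K <= d - L)%nat ->
  in_gap d z phi (L - 1) lam1 ->
  in_gap d z phi (L + K) lam2 ->
  f_fun d z phi v lam1 = 0 ->
  f_fun d z phi v lam2 = 0 ->
  g_fun d z phi v lam1 >= g_fun d z phi v lam2.
Proof.
  intros Hd Hz Hp1 Hmono _ HL HK [G1a G1b] [G2a G2b] F1 F2.
  assert (Mono : forall k i, (1 <= i)%nat -> (i + k <= d)%nat -> phi i <= phi (i + k)%nat).
  { induction k as [|k IH]; intros i Hi Hik.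
    - rewrite Nat.add_0_r; lra.
    - replace (i + S k)%nat with (S (i + k)) by lia.
      eapply Rle_trans; [apply (IH i); lia|]. apply Hmono; lia. }
  assert (Mono' : forall i j, (1 <= i)%nat -> (i <= j)%nat -> (j <= d)%nat -> phi i <= phi j).
  { intros i j Hi Hij Hj. replace j with (i + (j - i))%nat by lia. apply Mono; lia. }
  assert (Ppos : forall m, (1 <= m <= d)%nat -> 0 < phi m).
  { intros m Hm. eapply Rlt_le_trans; [exact Hp1|]. apply Mono'; lia. }
  set (x := lam1) in *. set (y := lam2) in *.
  assert (HxL : x < phi L) by (pose proof (G1b ltac:(lia)) as G; replace (S (L-1)) with L in G by lia; exact G).
  assert (Hx0 : 0 < x).
  { destruct (Nat.eq_dec L 1) as [E|E].
    - rewrite E in G1a. simpl in G1a. lra.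
    - rewrite phi_ext_S in G1a by lia. pose proof (Ppos (L-1)%nat ltac:(lia)). lra. }
  rewrite phi_ext_S in G2a by lia.
  assert (Hxy : x < y).
  { pose proof (Mono' L (L+K)%nat ltac:(lia) ltac:(lia) ltac:(lia)). lra. }
  assert (Hnx : forall m, (1 <= m <= d)%nat -> phi m <> x).
  { intros m Hm. destruct (Compare_dec.le_lt_dec L m) as [H|H].
    - pose proof (Mono' L m ltac:(lia) H ltac:(lia)). lra.
    - rewrite phi_ext_S in G1a by lia.
      pose proof (Mono' m (L-1)%nat ltac:(lia) ltac:(lia) ltac:(lia)). lra. }
  assert (Hny : forall m, (1 <= m <= d)%nat -> phi m <> y).
  { intros m Hm. destruct (Compare_dec.le_lt_dec m (L + K)) as [H|H].
    - pose proof (Mono' m (L+K)%nat ltac:(lia) H ltac:(lia)). lra.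
    - assert (y < phi (S (L + K))) by (apply G2b; lia).
      pose proof (Mono' (S (L+K)) m ltac:(lia) ltac:(lia) ltac:(lia)). lra. }
  set (al := (y - x) / (x * (x + y))). set (be := (y - x) / (y * (x + y))).
  assert (Key : g_fun d z phi v x - g_fun d z phi v y + al * f_fun d z phi v x + be * f_fun d z phi v y
    = sumR d (fun m => -1 * (phi m * Cmod (v m) ^ 2 / (x - phi m)) + 1 * (phi m * Cmod (v m) ^ 2 / (y - phi m))
       + (al * x ^ 2) * (phi m * Cmod (v m) ^ 2 / (x - phi m) ^ 2)
       + (be * y ^ 2) * (phi m * Cmod (v m) ^ 2 / (y - phi m) ^ 2))
      + z * (al + be - / x + / y) + (ln y - ln x - (al * x + be * y))).
  { rewrite sumR_lin4. unfold g_fun, f_fun. unfold Rdiv at 2 4. ring. }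
  rewrite F1, F2 in Key.
  assert (E1 : al + be - / x + / y = 0) by (unfold al, be; field; lra).
  assert (E2 : al * x + be * y = 2 * (y - x) / (x + y)) by (unfold al, be; field; lra).
  rewrite E1, E2 in Key.
  pose proof (ln_ineq x y Hx0 (Rlt_le _ _ Hxy)).
  assert (0 <= sumR d (fun m => -1 * (phi m * Cmod (v m) ^ 2 / (x - phi m)) + 1 * (phi m * Cmod (v m) ^ 2 / (y - phi m))
       + (al * x ^ 2) * (phi m * Cmod (v m) ^ 2 / (x - phi m) ^ 2)
       + (be * y ^ 2) * (phi m * Cmod (v m) ^ 2 / (y - phi m) ^ 2))).
  { apply sumR_nonneg. intros m Hm. unfold al, be.
    apply term_nonneg; try lra.
    - pose proof (Ppos m Hm); lra.
    - apply pow2_ge_0.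
    - apply Hnx; lia.
    - apply Hny; lia. }
  lra.
Qed.
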